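(* Let $X$ be a finite two-wide poset and let $w,y\in X$ with $w<y$ and $w\not\prec y$. Then there exist elements $x,\tilde x\in X$ with $x\neq\tilde x$, $w\prec x<y$ and $w\prec\tilde x<y$.
   Context: In a poset, write $a\prec b$ if $a<b$ and there is no $c$ with $a<c<b$. A poset $X$ is two-wide if for any $x,z,y\in X$ with $x\prec z\prec y$ there exists $z'\in X$, $z'\neq z$, with $x\prec z'\prec y$. *)

(* Defs.v *)
From HB Require Import structures.
From mathcomp Require Import all_boot all_order.
Set Implicit Arguments. Unset Strict Implicit. Unset Printing Implicit Defensive.
Import Order.Theory.
Local Open Scope order_scope.

Definition covers (d : Order.disp_t) (X : porderType d) (a b : X) : Prop :=
  a < b /\ ~ (exists c : X, a < c /\ c < b).

Definition two_wide (d : Order.disp_t) (X : porderType d) : Prop :=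
  forall x z y : X, covers x z -> covers z y ->
    exists z' : X, z' <> z /\ covers x z' /\ covers z' y.

(* Main.v *)
Require Import Defs.
From HB Require Import structures.
From mathcomp Require Import all_boot all_order.
Import Order.Theory.
Local Open Scope order_scope.

Lemma exists_min (d : Order.disp_t) (X : finPOrderType d) (P : pred X) (x : X) :
  P x -> exists m, P m /\ forall c, P c -> ~ c < m.
Proof.
set F := fun x : X => #|[pred c | P c && (c < x)%O]|.
move: {2}(F x) (leqnn (F x)) => n.
elim: n x => [|n IH] x Hn Px.
  exists x; split => // c Pc ltcx.
  have Hin : c \in [pred c | P c && (c < x)] by rewrite inE Pc ltcx.
  have : (0 < F x)%N by apply/card_gt0P; exists c.
  by move: Hn; rewrite leqn0 => /eqP ->.
case: (boolP [exists c, P c && (c < x)]) => [/existsP [c /andP [Pc ltcx]]|].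
  apply: (IH c) => //.
  have Hsub : [pred e | P e && (e < c)] \proper [pred e | P e && (e < x)].
    apply/properP; split.
      apply/subsetP => e; rewrite !inE => /andP [Pe lt]; rewrite Pe /=.
      exact: lt_trans lt ltcx.
    exists c; first by rewrite inE Pc ltcx.
    by rewrite inE ltxx andbF.
  have := proper_card Hsub; rewrite -/(F c) -/(F x); move: Hn; move=> Hn' Hp; rewrite -ltnS; exact: (leq_trans Hp Hn').
move=> /existsPn H; exists x; split => // c Pc ltcx.
by move: (H c); rewrite Pc ltcx.
Qed.

Theorem mainTheorem4 (d : Order.disp_t) (X : finPOrderType d) :
  two_wide X ->
  forall w y : X, w < y -> ~ covers w y ->
  exists x xt : X, x <> xt /\ covers w x /\ x < y /\ covers w xt /\ xt < y.
Proof.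
move=> tw w y wy ncov.
have [c0 [wc0 c0y]] : exists c, w < c /\ c < y.
  case: (boolP [exists c, (w < c) && (c < y)]) => [/existsP [c /andP [? ?]]|/existsPn H].
    by exists c.
  exfalso; apply: ncov; split => // -[c [h1 h2]]; by move: (H c); rewrite h1 h2.
have [x [/andP [wx xy] minx]] :=
  @exists_min d X [pred c | (w < c) && (c < y)] c0 (introT andP (conj wc0 c0y)).
have cwx : covers w x.
  split => // -[c [wc cx]]; apply: (minx c) => //=.
  by rewrite wc (lt_trans cx xy).
have [z [/andP [xz zy] minz]] :=
  @exists_min d X [pred c | (x < c) && (c <= y)] y (introT andP (conj xy (lexx y))).
have cxz : covers x z.
  split => // -[c [xc cz]]; apply: (minz c) => //=.
  by rewrite xc (ltW (lt_le_trans cz zy)).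
have [x' [nx [c1 c2]]] := tw w x z cwx cxz.
exists x, x'; split; first by move=> h; apply: nx.
split => //; split => //; split => //.
exact: lt_le_trans (proj1 c2) zy.
Qed.
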